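(* Let $\lambda$ be an uncountable regular cardinal, $S\subseteq S^\lambda_\omega$ stationary, and $\vec C=\langle C_\delta\mid\delta\in S\rangle$ a club-guessing sequence on $S$. Let $n<\omega$ and let $t:2n\to 2$ be a disjoint type of length $n$. Then there are $\gamma<\delta$, both in $S$, such that $C_\gamma[n]$ and $C_\delta[n]$ are disjoint and $\mathrm{tp}(C_\gamma[n],C_\delta[n])=t$.
   Context: $S^\lambda_\omega=\{\alpha<\lambda\mid\mathrm{cf}(\alpha)=\omega\}$. A club-guessing sequence on $S\subseteq S^\lambda_\omega$ is a sequence $\langle C_\delta\mid\delta\in S\rangle$ such that each $C_\delta$ is a club in $\delta$ of order type $\omega$, and for every club $D\subseteq\lambda$ there are stationarily many $\delta\in S$ with $C_\delta\subseteq D$. For a set of ordinals $A$ and $i<\mathrm{otp}(A)$, $A(i)$ is the unique $\alpha\in A$ with $\mathrm{otp}(A\cap\alpha)=i$, and for $I\subseteq\mathrm{otp}(A)$, $A[I]=\{A(i)\mid i\in I\}$; here $n=\{0,\dots,n-1\}$, so $C_\delta[n]$ is the set of the first $n$ elements of $C_\delta$. A disjoint type of length $n$ is a function $t:2n\to 2$ taking the value $0$ exactly $n$ times and the value $1$ exactly $n$ times. For disjoint $n$-element sets of ordinals $a,b$, $\mathrm{tp}(a,b)$ is the unique disjoint type $t$ of length $n$ such that, enumerating $a\cup b$ increasingly as $\alpha_0<\dots<\alpha_{2n-1}$, we have $a=\{\alpha_i\mid t(i)=0\}$ and $b=\{\alpha_i\mid t(i)=1\}$. *)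

(* Defs.v *)
(* The cardinal lambda is modelled as a type T carrying a
   strict well-order [lt]; elements of T are the ordinals < lambda. *)
From Stdlib Require Import Arith List Classical.
Import ListNotations.

Section Defs.
Context {T : Type} (lt : T -> T -> Prop).

Definition le (x y : T) : Prop := lt x y \/ x = y.

Definition well_order : Prop :=
  well_founded lt /\
  (forall x y z, lt x y -> lt y z -> lt x z) /\
  (forall x y, lt x y \/ x = y \/ lt y x).

Definition injective {A B : Type} (f : A -> B) : Prop :=
  forall a b, f a = f b -> a = b.

Definition is_cardinal : Prop :=
  forall x : T, ~ exists f : T -> {y : T | lt y x}, injective f.

Definition uncountable : Prop := ~ exists f : T -> nat, injective f.

Definition regular : Prop :=
  forall A : T -> Prop, (forall x, exists a, A a /\ le x a) ->
    exists f : T -> {a : T | A a}, injective f.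

Definition uncountable_regular_cardinal : Prop :=
  well_order /\ is_cardinal /\ uncountable /\ regular.

Definition cof_omega (alpha : T) : Prop :=
  exists f : nat -> T,
    (forall m k, m < k -> lt (f m) (f k)) /\
    (forall k, lt (f k) alpha) /\
    (forall b, lt b alpha -> exists k, lt b (f k)).

Definition club (D : T -> Prop) : Prop :=
  (forall x, exists d, D d /\ lt x d) /\
  (forall a, (exists b, lt b a) ->
     (forall b, lt b a -> exists d, D d /\ lt b d /\ lt d a) -> D a).

Definition stationary (S : T -> Prop) : Prop :=
  forall D, club D -> exists d, S d /\ D d.

Definition club_in (delta : T) (C : T -> Prop) : Prop :=
  (forall x, C x -> lt x delta) /\
  (forall x, lt x delta -> exists c, C c /\ lt x c) /\
  (forall a, lt a delta -> (exists b, lt b a) ->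
     (forall b, lt b a -> exists d, C d /\ lt b d /\ lt d a) -> C a).

Definition otp_omega (C : T -> Prop) : Prop :=
  exists e : nat -> T,
    (forall m k, m < k -> lt (e m) (e k)) /\
    (forall x, C x <-> exists k, e k = x).

Definition club_guessing (S : T -> Prop) (C : T -> T -> Prop) : Prop :=
  (forall d, S d -> club_in d (C d) /\ otp_omega (C d)) /\
  (forall D, club D -> stationary (fun d => S d /\ forall x, C d x -> D x)).

(* A(i) = alpha  iff  alpha in A and otp(A cap alpha) = i (i finite) *)
Definition nth_elem (A : T -> Prop) (i : nat) (alpha : T) : Prop :=
  A alpha /\
  exists l : list T, NoDup l /\ length l = i /\
    forall b, In b l <-> (A b /\ lt b alpha).

Definition first_n (A : T -> Prop) (n : nat) (x : T) : Prop :=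
  exists i, i < n /\ nth_elem A i x.

Definition disjoint (a b : T -> Prop) : Prop := forall x, a x -> b x -> False.

End Defs.

(* disjoint type of length n: t : 2n -> 2 (false = 0, true = 1), only the
   values on i < 2n matter *)
Definition disjoint_type (n : nat) (t : nat -> bool) : Prop :=
  length (filter (fun i => negb (t i)) (seq 0 (2 * n))) = n /\
  length (filter (fun i => t i) (seq 0 (2 * n))) = n.

Definition has_tp {T : Type} (lt : T -> T -> Prop) (n : nat) (t : nat -> bool)
    (a b : T -> Prop) : Prop :=
  exists f : nat -> T,
    (forall i j, i < j < 2 * n -> lt (f i) (f j)) /\
    (forall x, a x <-> exists i, i < 2 * n /\ t i = false /\ f i = x) /\
    (forall x, b x <-> exists i, i < 2 * n /\ t i = true /\ f i = x).

(* Main.v *)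
Require Import Defs.
From Stdlib Require Import Arith List.
From Stdlib Require Import Lia Classical ClassicalEpsilon ProofIrrelevance FinFun.
Import ListNotations.

Lemma choose_fun {A B : Type} (R : A -> B -> Prop) :
  (forall a, exists b, R a b) -> exists f : A -> B, forall a, R a (f a).
Proof.
  intros H. exists (fun a => proj1_sig (constructive_indefinite_description _ (H a))).
  intros a. exact (proj2_sig (constructive_indefinite_description _ (H a))).
Qed.

Section Main.
Variable T : Type.
Variable lt : T -> T -> Prop.
Hypothesis Hwf : well_founded lt.
Hypothesis Htr : forall x y z, lt x y -> lt y z -> lt x z.
Hypothesis Htri : forall x y, lt x y \/ x = y \/ lt y x.
Hypothesis Hcard : is_cardinal lt.
Hypothesis Hunc : @uncountable T.
Hypothesis Hreg : regular lt.

Lemma irrefl : forall x, ~ lt x x.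
Proof.
  intros x. induction (Hwf x) as [x _ IH]. intros H. exact (IH x H H).
Qed.

Lemma sig_eq {P : T -> Prop} (u v : {a : T | P a}) : proj1_sig u = proj1_sig v -> u = v.
Proof.
  destruct u as [a pa], v as [b pb]; simpl; intros ->. f_equal. apply proof_irrelevance.
Qed.

Lemma inhabited_T : exists x : T, True.
Proof.
  apply NNPP; intros Hn. apply Hunc. exists (fun _ => 0).
  intros a b _. exfalso. apply Hn. exists a; auto.
Qed.

Lemma nomax : forall x, exists y, lt x y.
Proof.
  intros x. apply NNPP; intros Hn.
  destruct (Hreg (fun a => a = x)) as [f Hf].
  { intros z. exists x. split; [reflexivity|]. unfold le.
    destruct (Htri z x) as [H|[H|H]]; [left; exact H|right; exact H|].
    exfalso; apply Hn; exists z; exact H. }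
  apply Hunc. exists (fun _ => 0). intros a b _. apply Hf.
  apply sig_eq. destruct (f a) as [u pu], (f b) as [v pv]. simpl. congruence.
Qed.

Lemma bounded_seg : forall (b : T) (h : T -> T), exists z, forall x, lt x b -> lt (h x) z.
Proof.
  intros b h. apply NNPP; intros Hn.
  assert (Hcof : forall z, exists a, (exists x, lt x b /\ h x = a) /\ le lt z a).
  { intros z. apply NNPP; intros Hz. apply Hn. exists z. intros x Hx.
    destruct (Htri (h x) z) as [H|[H|H]]; [exact H| |];
    exfalso; apply Hz; exists (h x); (split; [exists x; auto| unfold le]).
    - right; symmetry; exact H.
    - left; exact H. }
  destruct (Hreg _ Hcof) as [F HF].
  assert (G : forall u : {a : T | exists x, lt x b /\ h x = a},
             {x : T | lt x b /\ h x = proj1_sig u}).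
  { intros [a Ha]. simpl. apply constructive_indefinite_description. exact Ha. }
  apply (Hcard b).
  exists (fun z => exist (fun y => lt y b) (proj1_sig (G (F z))) (proj1 (proj2_sig (G (F z))))).
  intros z1 z2 Heq. apply HF. apply sig_eq.
  assert (E := f_equal (@proj1_sig _ _) Heq). simpl in E.
  rewrite <- (proj2 (proj2_sig (G (F z1)))), <- (proj2 (proj2_sig (G (F z2)))).
  rewrite E. reflexivity.
Qed.

Lemma bounded_nat : forall (a : nat -> T), exists z, forall m, lt (a m) z.
Proof.
  intros a. apply NNPP; intros Hn.
  assert (Hcof : forall z, exists y, (exists m, a m = y) /\ le lt z y).
  { intros z. apply NNPP; intros Hz. apply Hn. exists z. intros m.
    destruct (Htri (a m) z) as [H|[H|H]]; [exact H| |];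
    exfalso; apply Hz; exists (a m); (split; [exists m; auto| unfold le]).
    - right; symmetry; exact H.
    - left; exact H. }
  destruct (Hreg _ Hcof) as [F HF].
  assert (G : forall u : {y : T | exists m, a m = y}, {m : nat | a m = proj1_sig u}).
  { intros [y Hy]. simpl. apply constructive_indefinite_description. exact Hy. }
  apply Hunc.
  exists (fun z => proj1_sig (G (F z))).
  intros z1 z2 Heq. apply HF. apply sig_eq.
  rewrite <- (proj2_sig (G (F z1))), <- (proj2_sig (G (F z2))).
  rewrite Heq. reflexivity.
Qed.

Lemma least : forall P : T -> Prop, (exists x, P x) -> exists x, P x /\ forall y, P y -> ~ lt y x.
Proof.
  intros P [x0 H0]. apply NNPP; intros Hn.
  assert (H : forall x, ~ P x).
  { intros x. induction (Hwf x) as [x _ IH]. intros Hx. apply Hn. exists x. split; [exact Hx|].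
    intros y Hy Hyx. exact (IH y Hyx Hy). }
  exact (H x0 H0).
Qed.

Lemma club_full : club lt (fun _ => True).
Proof. split. - intros x. destruct (nomax x) as [y Hy]. exists y; auto. - auto. Qed.

Lemma club_tail : forall g, club lt (fun z => lt g z).
Proof.
  intros g. split.
  - intros x. destruct (Htri x g) as [H|[H|H]].
    + destruct (nomax g) as [y Hy]. exists y. split; [exact Hy| exact (Htr _ _ _ H Hy)].
    + subst. destruct (nomax g) as [y Hy]. exists y; auto.
    + destruct (nomax x) as [y Hy]. exists y. split; [exact (Htr _ _ _ H Hy)|exact Hy].
  - intros a [b Hb] Hc. destruct (Hc b Hb) as [d [Hd1 [_ Hd3]]]. exact (Htr _ _ _ Hd1 Hd3).
Qed.

Lemma le_lt_tr : forall x y z, le lt x y -> lt y z -> lt x z.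
Proof. intros x y z [H|H] H'; [exact (Htr _ _ _ H H')|subst; exact H']. Qed.

Lemma max2 : forall x y, exists m, le lt x m /\ le lt y m.
Proof.
  intros x y. unfold le. destruct (Htri x y) as [H|[H|H]].
  - exists y; auto.
  - subst; exists y; auto.
  - exists x; auto.
Qed.

Lemma diag_club : forall (E : T -> T -> Prop) (b0 : T), (forall x, club lt (E x)) ->
  club lt (fun a => lt b0 a /\ forall x, lt x a -> E x a).
Proof.
  intros E b0 HE. split.
  2: { intros a [b Hb] Hc. destruct (Hc b Hb) as [d [[Hd0 _] [_ Hda]]].
       split; [exact (Htr _ _ _ Hd0 Hda)|].
       intros x Hx. apply (proj2 (HE x)). { exists x; exact Hx. }
       intros c Hc'.
       assert (exists m, lt m a /\ le lt c m /\ le lt x m) as [m [Hm [Hcm Hxm]]].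
       { unfold le. destruct (Htri c x) as [H|[H|H]].
         - exists x. auto.
         - exists x. subst. auto.
         - exists c. auto. }
       destruct (Hc m Hm) as [d' [[_ Hd'] [Hmd Hd'a]]].
       exists d'. split; [|split; [|exact Hd'a]].
       - apply Hd'. exact (le_lt_tr _ _ _ Hxm Hmd).
       - exact (le_lt_tr _ _ _ Hcm Hmd). }
  intros y.
  assert (Hnext : forall b, exists b', lt b b' /\
            forall x, lt x b -> exists d, E x d /\ lt b d /\ lt d b').
  { intros b. destruct (choose_fun (fun x d => E x d /\ lt b d)) as [h Hh].
    { intros x. destruct (proj1 (HE x) b) as [d Hd]. exists d. exact Hd. }
    destruct (bounded_seg b h) as [z Hz].
    destruct (nomax b) as [s Hs].
    destruct (Htri z s) as [H|[H|H]].
    - exists s. split; [exact Hs|]. intros x Hx. exists (h x).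
      split; [apply Hh|split; [apply Hh|]]. exact (Htr _ _ _ (Hz x Hx) H).
    - subst. exists s. split; [exact Hs|]. intros x Hx. exists (h x).
      split; [apply Hh|split; [apply Hh|]]. exact (Hz x Hx).
    - exists z. split; [exact (Htr _ _ _ Hs H)|]. intros x Hx. exists (h x).
      split; [apply Hh|split; [apply Hh|]]. exact (Hz x Hx). }
  destruct (choose_fun _ Hnext) as [nx Hnx].
  destruct (max2 y b0) as [w [Hyw Hbw]].
  pose (a := fun m => Nat.iter m nx (nx w)).
  assert (Ha : forall m, lt (a m) (a (S m))).
  { intros m. exact (proj1 (Hnx (a m))). }
  assert (Hmono : forall m k, m < k -> lt (a m) (a k)).
  { intros m k; induction k as [|k IH]; intros Hmk; [lia|].
    destruct (Nat.eq_dec m k) as [->|Hne]; [apply Ha|].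
    apply (Htr _ (a k)); [apply IH; lia|apply Ha]. }
  assert (Hmono' : forall m k, m <= k -> le lt (a m) (a k)).
  { intros m k Hmk. destruct (Nat.eq_dec m k) as [->|Hne]; [right; reflexivity|].
    left; apply Hmono; lia. }
  destruct (bounded_nat a) as [z Hz].
  destruct (least (fun z => forall m, lt (a m) z) (ex_intro _ z Hz)) as [al [Hal Hmin]].
  assert (Hbelow : forall c, lt c al -> exists m, lt c (a m)).
  { intros c Hc. assert (Hnc : ~ (forall m, lt (a m) c)) by (intro H; exact (Hmin c H Hc)).
    apply not_all_ex_not in Hnc as [m Hm].
    destruct (Htri (a m) c) as [H|[H|H]]; [contradiction| |].
    - exists (S m). rewrite <- H. apply Ha.
    - exists m. exact H. }
  assert (Hw0 : lt w (a 0)) by exact (proj1 (Hnx w)).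
  exists al. split; [split|].
  - exact (le_lt_tr _ _ _ Hbw (Htr _ _ _ Hw0 (Hal 0))).
  - intros x Hx. apply (proj2 (HE x)). { exists x; exact Hx. }
    intros c Hc. destruct (Hbelow c Hc) as [m1 H1]. destruct (Hbelow x Hx) as [m2 H2].
    assert (Hck : lt c (a (m1 + m2))).
    { destruct (Hmono' m1 (m1 + m2) ltac:(lia)) as [H|H]; [exact (Htr _ _ _ H1 H)|rewrite <- H; exact H1]. }
    assert (Hxk : lt x (a (m1 + m2))).
    { destruct (Hmono' m2 (m1 + m2) ltac:(lia)) as [H|H]; [exact (Htr _ _ _ H2 H)|rewrite <- H; exact H2]. }
    destruct (proj2 (Hnx (a (m1 + m2))) x Hxk) as [d [Hd1 [Hd2 Hd3]]].
    exists d. split; [exact Hd1|split].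
    + exact (Htr _ _ _ Hck Hd2).
    + exact (Htr _ _ _ Hd3 (Hal (S (m1 + m2)))).
  - exact (le_lt_tr _ _ _ Hyw (Htr _ _ _ Hw0 (Hal 0))).
Qed.


Definition enum_of (e : nat -> T) (A : T -> Prop) :=
  (forall m k, m < k -> lt (e m) (e k)) /\ (forall x, A x <-> exists k, e k = x).

Lemma enum_lt_iff : forall e A, enum_of e A -> forall m k, lt (e m) (e k) <-> m < k.
Proof.
  intros e A [He _] m k. split; [|apply He]. intros H.
  destruct (Nat.lt_total m k) as [Hl|[Hl|Hl]]; [exact Hl| subst; exfalso; exact (irrefl _ H)|].
  exfalso; exact (irrefl _ (Htr _ _ _ H (He _ _ Hl))).
Qed.

Lemma enum_inj : forall e A, enum_of e A -> forall m k, e m = e k -> m = k.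
Proof.
  intros e A [He _] m k Heq.
  destruct (Nat.lt_total m k) as [Hl|[Hl|Hl]]; [|exact Hl|].
  - exfalso. pose proof (He _ _ Hl) as H. rewrite Heq in H. exact (irrefl _ H).
  - exfalso. pose proof (He _ _ Hl) as H. rewrite Heq in H. exact (irrefl _ H).
Qed.

Lemma nth_elem_enum : forall e A, enum_of e A -> forall i x, nth_elem lt A i x <-> e i = x.
Proof.
  intros e A HA i x. pose proof HA as [He Hr]. split.
  - intros [Hx [l [Hnd [Hl Hin]]]]. destruct (proj1 (Hr x) Hx) as [k <-].
    assert (Hnd2 : NoDup (map e (seq 0 k))).
    { apply Injective_map_NoDup; [intros u v; apply (enum_inj e A HA)|apply seq_NoDup]. }
    assert (I1 : incl l (map e (seq 0 k))).
    { intros b Hb. apply Hin in Hb as [Ab Hbk]. destruct (proj1 (Hr b) Ab) as [m <-].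
      apply in_map. apply in_seq. apply (enum_lt_iff e A HA) in Hbk. lia. }
    assert (I2 : incl (map e (seq 0 k)) l).
    { intros b Hb. apply in_map_iff in Hb as [m [<- Hm]]. apply in_seq in Hm.
      apply Hin. split; [apply Hr; exists m; reflexivity|apply He; lia]. }
    pose proof (NoDup_incl_length Hnd I1) as L1.
    pose proof (NoDup_incl_length Hnd2 I2) as L2.
    rewrite length_map, length_seq in L1, L2. assert (i = k) by lia. subst; reflexivity.
  - intros <-. split; [apply Hr; exists i; reflexivity|].
    exists (map e (seq 0 i)). split.
    { apply Injective_map_NoDup; [intros u v; apply (enum_inj e A HA)|apply seq_NoDup]. }
    split; [rewrite length_map, length_seq; reflexivity|].
    intros b; split.
    + intros Hb. apply in_map_iff in Hb as [m [<- Hm]]. apply in_seq in Hm.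
      split; [apply Hr; exists m; reflexivity|apply He; lia].
    + intros [Ab Hbk]. destruct (proj1 (Hr b) Ab) as [m <-].
      apply in_map. apply in_seq. apply (enum_lt_iff e A HA) in Hbk. lia.
Qed.

Lemma list_pref : forall (L : list T) e n, length L = n ->
  (forall i, i < n -> nth_error L i = Some (e i)) ->
  forall x, (exists i, i < n /\ e i = x) <-> In x L.
Proof.
  intros L e n HL HP x. split.
  - intros [i [Hi <-]]. apply (nth_error_In _ i). apply HP; exact Hi.
  - intros Hx. destruct (In_nth_error _ _ Hx) as [i Hi].
    assert (Hil : i < n).
    { rewrite <- HL. apply nth_error_Some. rewrite Hi. discriminate. }
    exists i. split; [exact Hil|]. rewrite HP in Hi by exact Hil. congruence.
Qed.

Variable S : T -> Prop.
Variable C : T -> T -> Prop.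
Hypothesis HG1 : forall d, S d -> club_in lt d (C d) /\ otp_omega lt (C d).
Hypothesis HG2 : forall D, club lt D -> stationary lt (fun d => S d /\ forall x, C d x -> D x).

Definition rich (s : list T) := forall E, club lt E -> exists d e, S d /\ enum_of e (C d) /\
  (forall i, i < length s -> nth_error s i = Some (e i)) /\ (forall i, length s <= i -> E (e i)).

Lemma rich_nil : rich [].
Proof.
  intros E HE. destruct (HG2 E HE E HE) as [d [[Hd HCd] _]].
  destruct (proj2 (HG1 d Hd)) as [e He]. exists d, e. split; [exact Hd|]. split; [exact He|].
  split.
  - intros i Hi; simpl in Hi; lia.
  - intros i _. apply HCd. apply (proj2 He). exists i; reflexivity.
Qed.

Lemma rich_step : forall s, rich s -> forall b, exists x, lt b x /\ rich (s ++ [x]).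
Proof.
  intros s Hs b. apply NNPP; intros Hn.
  assert (Hbad : forall x, exists E, club lt E /\ (lt b x -> ~ exists d e, S d /\ enum_of e (C d) /\
     (forall i, i < length (s ++ [x]) -> nth_error (s ++ [x]) i = Some (e i)) /\
     (forall i, length (s ++ [x]) <= i -> E (e i)))).
  { intros x. destruct (classic (lt b x)) as [Hbx|Hbx].
    - assert (Hr : ~ rich (s ++ [x])) by (intro Hr; apply Hn; exists x; auto).
      unfold rich in Hr. apply not_all_ex_not in Hr as [E HE].
      exists E. apply imply_to_and in HE as [HE1 HE2]. split; [exact HE1|]. intros _. exact HE2.
    - exists (fun _ => True). split; [exact club_full|]. intros H; contradiction. }
  destruct (choose_fun _ Hbad) as [Ef HEf].
  destruct (Hs _ (diag_club Ef b (fun x => proj1 (HEf x)))) as [d [e [Hd [He [Hpre Hrest]]]]].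
  destruct (Hrest (length s) (le_n _)) as [Hbk _].
  apply (proj2 (HEf (e (length s))) Hbk). exists d, e. split; [exact Hd|]. split; [exact He|]. split.
  - intros i Hi. rewrite length_app in Hi; simpl in Hi.
    destruct (Nat.lt_ge_cases i (length s)) as [Hik|Hik].
    + rewrite nth_error_app1 by exact Hik. apply Hpre. exact Hik.
    + assert (i = length s) by lia. subst i. rewrite nth_error_app2 by lia.
      rewrite Nat.sub_diag. reflexivity.
  - intros i Hi. rewrite length_app in Hi; simpl in Hi.
    apply (proj2 (Hrest i ltac:(lia))). apply (proj1 He). lia.
Qed.

Variable t : nat -> bool.
Variable n : nat.
Hypothesis Ht : disjoint_type n t.

Definition subl (f : nat -> T) (p : nat -> bool) (j : nat) := map f (filter p (seq 0 j)).
Definition upd (f : nat -> T) (j : nat) (x : T) := fun i => if Nat.eqb i j then x else f i.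

Lemma subl_ext : forall f p j x,
  subl (upd f j x) p (Datatypes.S j) = subl f p j ++ (if p j then [x] else []).
Proof.
  intros f p j x. unfold subl. rewrite seq_S, filter_app, map_app. f_equal.
  - apply map_ext_in. intros i Hi. apply filter_In in Hi as [Hi _]. apply in_seq in Hi.
    unfold upd. destruct (Nat.eqb_spec i j); [lia|reflexivity].
  - simpl. destruct (p j); simpl; [unfold upd; rewrite Nat.eqb_refl|]; reflexivity.
Qed.

Lemma in_subl : forall f p j x, In x (subl f p j) <-> exists i, i < j /\ p i = true /\ f i = x.
Proof.
  intros f p j x. unfold subl. rewrite in_map_iff. split.
  - intros [i [<- Hi]]. apply filter_In in Hi as [Hi Hp]. apply in_seq in Hi.
    exists i. repeat split; auto; lia.
  - intros [i [Hi [Hp <-]]]. exists i. split; [reflexivity|]. apply filter_In.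
    split; [apply in_seq; lia|exact Hp].
Qed.

Lemma build : forall j, exists f : nat -> T, (forall i k, i < k < j -> lt (f i) (f k)) /\
  rich (subl f (fun i => negb (t i)) j) /\ rich (subl f t j).
Proof.
  destruct inhabited_T as [x0 _].
  induction j as [|j IH].
  - exists (fun _ => x0). split; [intros; lia|]. split; apply rich_nil.
  - destruct IH as [f [Hf [H0 H1]]].
    assert (Hb : exists b, forall i, i < j -> le lt (f i) b).
    { destruct j as [|j']. - exists x0. intros; lia.
      - exists (f j'). intros i Hi. unfold le. destruct (Nat.eq_dec i j') as [->|Hne]; [right; reflexivity|].
        left. apply Hf. lia. }
    destruct Hb as [b Hb].
    assert (Hmon : forall x, lt b x -> forall i k, i < k < Datatypes.S j -> lt (upd f j x i) (upd f j x k)).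
    { intros x Hx i k Hik. unfold upd.
      destruct (Nat.eqb_spec k j), (Nat.eqb_spec i j); try lia.
      - exact (le_lt_tr _ _ _ (Hb i ltac:(lia)) Hx).
      - apply Hf; lia. }
    destruct (t j) eqn:Htj.
    + destruct (rich_step _ H1 b) as [x [Hbx Hx]]. exists (upd f j x).
      split; [exact (Hmon x Hbx)|]. rewrite !subl_ext, Htj. simpl.
      rewrite app_nil_r. split; assumption.
    + destruct (rich_step _ H0 b) as [x [Hbx Hx]]. exists (upd f j x).
      split; [exact (Hmon x Hbx)|]. rewrite !subl_ext, Htj. simpl.
      rewrite app_nil_r. split; assumption.
Qed.

Lemma main_sec : exists g d, S g /\ S d /\ lt g d /\
    disjoint (first_n lt (C g) n) (first_n lt (C d) n) /\
    has_tp lt n t (first_n lt (C g) n) (first_n lt (C d) n).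
Proof.
  destruct (build (2*n)) as [f [Hf [H0 H1]]].
  destruct Ht as [L0 L1].
  set (Lg := subl f (fun i => negb (t i)) (2*n)) in *.
  set (Ld := subl f t (2*n)) in *.
  assert (lg : length Lg = n) by (unfold Lg, subl; rewrite length_map; exact L0).
  assert (ld : length Ld = n) by (unfold Ld, subl; rewrite length_map; exact L1).
  destruct (H0 _ club_full) as [g [eg [Sg [Eg [Pg _]]]]].
  destruct (H1 _ (club_tail g)) as [d [ed [Sd [Ed [Pd Rd]]]]].
  rewrite lg in Pg. rewrite ld in Pd.
  assert (Hgd : lt g d).
  { apply (Htr _ (ed n)).
    - apply Rd. lia.
    - apply (proj1 (proj1 (HG1 d Sd))). apply (proj2 Ed). exists n; reflexivity. }
  assert (Fg : forall x, first_n lt (C g) n x <-> exists i, i < 2*n /\ t i = false /\ f i = x).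
  { intros x. unfold first_n.
    transitivity (exists i, i < n /\ eg i = x).
    { split; intros [i [Hi Hx]]; exists i; split; auto; apply (nth_elem_enum eg _ Eg); auto. }
    rewrite (list_pref Lg eg n lg Pg). unfold Lg. rewrite in_subl.
    split; intros [i [Hi [Ti Fi]]]; exists i; repeat split; auto.
    - apply Bool.negb_true_iff in Ti. exact Ti.
    - apply Bool.negb_true_iff. exact Ti. }
  assert (Fd : forall x, first_n lt (C d) n x <-> exists i, i < 2*n /\ t i = true /\ f i = x).
  { intros x. unfold first_n.
    transitivity (exists i, i < n /\ ed i = x).
    { split; intros [i [Hi Hx]]; exists i; split; auto; apply (nth_elem_enum ed _ Ed); auto. }
    rewrite (list_pref Ld ed n ld Pd). unfold Ld. rewrite in_subl. reflexivity. }
  exists g, d. split; [exact Sg|]. split; [exact Sd|]. split; [exact Hgd|]. split.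
  - intros x Hx Hy. apply Fg in Hx as [i [Hi [Ti Fi]]]. apply Fd in Hy as [k [Hk [Tk Fk]]].
    destruct (Nat.lt_total i k) as [H|[H|H]].
    + assert (Hl : lt (f i) (f k)) by (apply Hf; lia). rewrite Fi, Fk in Hl. exact (irrefl _ Hl).
    + subst k; congruence.
    + assert (Hl : lt (f k) (f i)) by (apply Hf; lia). rewrite Fi, Fk in Hl. exact (irrefl _ Hl).
  - exists f. split; [intros i k Hik; apply Hf; lia|]. split; assumption.
Qed.

End Main.

Theorem lemma3p4 (T : Type) (lt : T -> T -> Prop)
  (Hlam : uncountable_regular_cardinal lt)
  (S : T -> Prop) (HSw : forall d, S d -> cof_omega lt d)
  (HS : stationary lt S)
  (C : T -> T -> Prop) (HC : club_guessing lt S C)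
  (n : nat) (t : nat -> bool) (Ht : disjoint_type n t) :
  exists g d, S g /\ S d /\ lt g d /\
    disjoint (first_n lt (C g) n) (first_n lt (C d) n) /\
    has_tp lt n t (first_n lt (C g) n) (first_n lt (C d) n).
Proof.
  destruct Hlam as [[Hwf [Htr Htri]] [Hcard [Hunc Hreg]]].
  destruct HC as [HG1 HG2].
  eapply main_sec; eassumption.
Qed.
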